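(* Let $\mathcal{L}$ be a distributed ledger object that guarantees eventual consistency. Consider the algorithm in which each process, to propose value $v$, executes: $\mathcal{L}.\mathrm{append}(v)$; $V_i\leftarrow\mathcal{L}.\mathrm{get}()$; while $V_i$ is the empty sequence, $V_i\leftarrow\mathcal{L}.\mathrm{get}()$; then decide the first value in $V_i$. This algorithm solves the consensus problem.
   Context: A ledger is a concurrent object holding a sequence $S$ of records (initially empty) with operations $\mathrm{get}()$ (returns the sequence) and $\mathrm{append}(r)$ (extends it with $r$); $\Vert$ denotes concatenation. Each operation has an invocation and a response event; a history is a sequence of such events in real-time order, complete if every operation in it has both events. Sequential specification: in a sequential history, if at the invocation of $\pi$ the ledger value is $V$ (initially empty), a $\mathrm{get}()$ returns $V$ and after an $\mathrm{append}(r)$ the value is $V\Vert r$. A sequence $X$ extends $Y$ if $Y$ is a prefix of $X$. A distributed ledger is eventually consistent if, for every complete history $H$, there is a permutation $\sigma$ of the operations of $H$ such that (a) $\sigma$ follows the sequential specification, and (b) there exists a complete history $H'$ extending $H$ such that for every complete history $H''$ extending $H'$, every complete $\mathrm{get}()$ operation in $H''\setminus H'$ returns a sequence containing $r$, for every $\mathrm{append}(r)$ in $H$. Consensus problem: in a system with at least one non-faulty process, each process $p_i$ proposes a value $v_i\in V$ and irrevocably decides a value $o_i\in V$ such that (Agreement) all decision values are identical; (Validity) if all proposals are the same value $v$, then $v$ is the only possible decision; (Termination) in any fair execution every non-faulty process decides. Processes may crash. *)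

(* Defs.v *)
From mathcomp Require Import all_boot.
Set Implicit Arguments. Unset Strict Implicit. Unset Printing Implicit Defensive.

Section Ledger.
Variables (P : finType) (V : eqType).

Inductive op := Get | Append of V.
Inductive ans := Ack | Ret of seq V.

Inductive levent := Inv of op | Res of ans.

Definition event := (P * levent)%type.

(** A (possibly infinite) execution: at step n there is at most one event
    ([None] = no event at that step, so finite executions are included). *)
Definition execution := nat -> option event.

Definition prefix (E : execution) (k : nat) : seq event := pmap E (iota 0 k).

Definition proj (p : P) (h : seq event) : seq levent :=
  pmap (fun e : event => if e.1 == p then Some e.2 else None) h.

Definition invs (t : seq levent) : seq op :=
  pmap (fun e => if e is Inv o then Some o else None) t.
Definition ress (t : seq levent) : seq ans :=
  pmap (fun e => if e is Res a then Some a else None) t.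

(** An operation of a history is identified by (p, j): the j-th operation
    invoked by process p.  Its invocation and (optional) response: *)
Definition op_at (h : seq event) (p : P) (j : nat) : option op :=
  onth (invs (proj p h)) j.
Definition ans_at (h : seq event) (p : P) (j : nat) : option ans :=
  onth (ress (proj p h)) j.

Definition is_op (h : seq event) (x : P * nat) : bool :=
  x.2 < size (invs (proj x.1 h)).
Definition is_complete_op (h : seq event) (x : P * nat) : bool :=
  isSome (ans_at h x.1 x.2).

(** An operation as it appears in a completion of h: complete operations keep
    their response; a pending append may be completed (response Ack). *)
Definition completed_op (h : seq event) (x : P * nat) : option (op * ans) :=
  match op_at h x.1 x.2, ans_at h x.1 x.2 with
  | Some o, Some a => Some (o, a)
  | Some (Append r), None => Some (Append r, Ack)
  | _, _ => None
  end.

Fixpoint legal_from (S : seq V) (s : seq (op * ans)) : bool :=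
  match s with
  | [::] => true
  | (Get, Ret R) :: s' => (R == S) && legal_from S s'
  | (Append r, Ack) :: s' => legal_from (rcons S r) s'
  | _ :: _ => false
  end.
Definition legal (s : seq (op * ans)) : bool := legal_from [::] s.

(** Eventual consistency of one execution of the ledger.
  (a) every (completion of a) history formed by the execution admits a
      permutation sigma of its operations that follows the sequential spec;
  (b) for every history H formed by the execution, there is a later point H'
      such that every get invoked after H' that completes returns a sequence
      containing r, for every append(r) completed in H. *)
Definition EC_exec (E : execution) : Prop :=
  (forall k, exists sigma : seq (P * nat),
      [/\ uniq sigma,
          all (fun x => isSome (completed_op (prefix E k) x)) sigma,
          (forall x, is_op (prefix E k) x -> is_complete_op (prefix E k) x ->
                     x \in sigma) &
          legal (pmap (completed_op (prefix E k)) sigma)])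
  /\
  (forall k, exists k', k <= k' /\
      forall (p : P) (j m : nat) (s : seq V),
        size (invs (proj p (prefix E k'))) <= j ->
        op_at (prefix E m) p j = Some Get ->
        ans_at (prefix E m) p j = Some (Ret s) ->
        forall (q : P) (i : nat) (r : V),
          op_at (prefix E k) q i = Some (Append r) ->
          is_complete_op (prefix E k) (q, i) ->
          r \in s).

Definition ledger := execution -> Prop.

Definition eventually_consistent (L : ledger) : Prop :=
  forall E, L E -> EC_exec E.

(** The algorithm of each process proposing v:
    L.append(v); V <- L.get(); while V = [] do V <- L.get(); decide head V. *)
Inductive astate := AStart | AAppending | AReady | AGetting | ADecided of V.

Definition astep (v : V) (st : option astate) (e : levent) : option astate :=
  match st with
  | None => None
  | Some st =>
    match st, e with
    | AStart, Inv (Append r) => if r == v then Some AAppending else None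
    | AAppending, Res Ack => Some AReady
    | AReady, Inv Get => Some AGetting
    | AGetting, Res (Ret [::]) => Some AReady
    | AGetting, Res (Ret (x :: _)) => Some (ADecided x)
    | _, _ => None
    end
  end.

Definition arun (v : V) (t : seq levent) : option astate :=
  foldl (astep v) (Some AStart) t.

(** Every process (faulty or not) follows the algorithm, until it possibly
    crashes (stops). *)
Definition follows_alg (E : execution) (prop : P -> V) : Prop :=
  forall p k, arun (prop p) (proj p (prefix E k)) <> None.

Definition decides (E : execution) (prop : P -> V) (p : P) (o : V) : Prop :=
  exists k, arun (prop p) (proj p (prefix E k)) = Some (ADecided o).

(** Fairness: a non-faulty process that has not decided keeps taking steps
    (its invocations are issued and the ledger responds to them). *)
Definition fair (E : execution) (prop : P -> V) (correct : pred P) : Prop :=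
  forall p, correct p -> forall k,
    (forall o, arun (prop p) (proj p (prefix E k)) <> Some (ADecided o)) ->
    exists k', size (proj p (prefix E k)) < size (proj p (prefix E k')).

Definition consensus_agreement (E : execution) (prop : P -> V) : Prop :=
  forall p q o o', decides E prop p o -> decides E prop q o' -> o = o'.
Definition consensus_validity (E : execution) (prop : P -> V) : Prop :=
  forall v, (forall p, prop p = v) -> forall p o, decides E prop p o -> o = v.
Definition consensus_termination (E : execution) (prop : P -> V)
    (correct : pred P) : Prop :=
  forall p, correct p -> exists o, decides E prop p o.

End Ledger.

(* Main.v *)
Require Import Defs.
From mathcomp Require Import all_boot zify.
From Stdlib Require Classical.
Set Implicit Arguments. Unset Strict Implicit. Unset Printing Implicit Defensive.

Section Aux.
Variable (V : eqType).
Implicit Types (v : V) (u t : seq (levent V)).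

Lemma foldl_None v t : foldl (astep v) None t = None.
Proof. by elim: t. Qed.

Lemma ready_get v j u : foldl (astep v) (Some (AReady V)) u <> None ->
  2 * j + 2 <= size u ->
  exists s, [/\ onth (invs u) j = Some (Get V), onth (ress u) j = Some (Ret s) &
    forall x s', s = x :: s' -> foldl (astep v) (Some (AReady V)) u = Some (ADecided x)].
Proof.
elim: j u => [|j IH] [|e1 [|e2 u]] //=; rewrite ?muln0 ?mulnS //=.
- case: e1 => [[|r]|a] /=; rewrite ?foldl_None // => H _.
  case: e2 H => [o|[|[|x s]]] /=; rewrite ?foldl_None // => H.
  + by exists [::]; split.
  + exists (x :: s); split => // y s' [<- _].
    by case: u H => [|e u] //=; rewrite foldl_None.
- case: e1 => [[|r]|a] /=; rewrite ?foldl_None // => H Hs.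
  case: e2 H => [o|[|[|x s]]] /=; rewrite ?foldl_None // => H.
  + have [|s0 [H1 H2 H3]] := IH u H; first by move: Hs; lia.
    by exists s0; split.
  + case: u H Hs => [|e [|e' u]] //=; rewrite ?foldl_None //; lia.
Qed.

Lemma ready_decided v o u : foldl (astep v) (Some (AReady V)) u = Some (ADecided o) ->
  exists j s, onth (invs u) j = Some (Get V) /\ onth (ress u) j = Some (Ret (o :: s)).
Proof.
have [n] := ubnP (size u); elim: n u => [|n IH] [|e1 [|e2 u]] //=.
- by case: e1 => [[|r]|a].
- case: e1 => [[|r]|a] /=; rewrite ?foldl_None // => Hs.
  case: e2 => [o'|[|[|x s]]] /=; rewrite ?foldl_None // => H.
  + have [|j [s0 [H1 H2]]] := IH u _ H; first by move: Hs; lia.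
    by exists j.+1, s0.
  + case: u H {Hs} => [|e u] /=; last by rewrite foldl_None.
    by case=> <-; exists 0, s.
Qed.

Lemma start_shape v t : arun v t <> None -> 2 <= size t ->
  exists u, t = Inv (Append v) :: Res (Ack V) :: u /\ foldl (astep v) (Some (AReady V)) u <> None.
Proof.
rewrite /arun; case: t => [|e1 [|e2 u]] //= H _.
case: e1 H => [[|r]|a] /=; rewrite ?foldl_None //.
case: eqP => [->|]; last by rewrite foldl_None.
case: e2 => [o|[|R]] /=; rewrite ?foldl_None // => H.
by exists u.
Qed.

Lemma append_prop v t st j r : foldl (astep v) st t <> None ->
  onth (invs t) j = Some (Append r) -> r = v.
Proof.
elim: t st j => [|e t IH] st j /=; first by case: j.
case: e => [[|r']|a] /= H.
- by case: j => [|j] //= /(IH _ _ H).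
- case: j => [|j] /=; last exact: (IH _ _ H).
  case=> <-; case: st H => [[]|] /=; rewrite ?foldl_None //.
  by case: eqP => [->|]; rewrite ?foldl_None.
- exact: IH H.
Qed.


Definition getrets (s : seq (op V * ans V)) : seq (seq V) :=
  pmap (fun x => match x with (Get, Ret R) => Some R | _ => None end) s.
Definition appends (s : seq (op V * ans V)) : seq V :=
  pmap (fun x => match x.1 with Append r => Some r | _ => None end) s.

Lemma legal_head s S c S0 a R : legal_from S s -> S = c :: S0 ->
  a :: R \in getrets s -> a = c.
Proof.
elim: s S S0 => [|[[|r] [|R0]] s IH] S S0 //=.
- case/andP=> /eqP -> Hl ES; rewrite in_cons => /orP[/eqP EA|]; first by move: ES; rewrite -EA => -[].
  exact: IH Hl ES.
- by move=> Hl ES; apply: (IH _ (rcons S0 r) Hl); rewrite ES.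
Qed.

Lemma legal_agree s S a R b R' : legal_from S s ->
  a :: R \in getrets s -> b :: R' \in getrets s -> a = b.
Proof.
elim: s S => [|[[|r] [|R0]] s IH] S //=.
- case/andP=> /eqP ES Hl; rewrite !in_cons => /orP[/eqP EA|Ha] /orP[/eqP EB|Hb].
  + by rewrite -EB in EA; case: EA.
  + by symmetry; apply: (legal_head Hl _ Hb); rewrite -ES -EA.
  + by apply: (legal_head Hl _ Ha); rewrite -ES -EB.
  + exact: IH Hl Ha Hb.
- by move=> Hl; apply: IH Hl.
Qed.

Lemma legal_valid w s S R : legal_from S s -> all (pred1 w) S ->
  all (pred1 w) (appends s) -> R \in getrets s -> all (pred1 w) R.
Proof.
elim: s S => [|[[|r] [|R0]] s IH] S //=.
- case/andP=> /eqP ES Hl HS Ha; rewrite in_cons => /orP[/eqP ->|]; first by rewrite ES.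
  exact: IH Hl HS Ha.
- move=> Hl HS /andP[Hr Ha]; apply: IH Hl _ Ha.
  by rewrite all_rcons HS andbT.
Qed.

End Aux.

Section Exec.
Variables (P : finType) (V : eqType).

Lemma getrets_sigma (h : seq (event P V)) sigma x R : x \in sigma ->
  completed_op h x = Some (Get V, Ret R) ->
  R \in getrets (pmap (completed_op h) sigma).
Proof.
elim: sigma => [|y sigma IH] //=; rewrite in_cons => /orP[/eqP <- ->|Hx Hc] /=.
  by rewrite mem_head.
case: (completed_op h y) => [[[|r] [|R0]]|] //=; rewrite ?in_cons IH ?orbT //.
Qed.

Lemma appends_sigma (h : seq (event P V)) sigma w :
  (forall x r, op_at h x.1 x.2 = Some (Append r) -> r = w) ->
  all (pred1 w) (appends (pmap (completed_op h) sigma)).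
Proof.
move=> Hw; elim: sigma => [|y sigma IH] //=.
rewrite /completed_op; move: (Hw y).
case: (op_at h y.1 y.2) => [[|r]|] //=; case: (ans_at h y.1 y.2) => [a|] //= Hy;
  by rewrite IH (Hy r) ?eqxx.
Qed.

Lemma prefix_mono (E : execution P V) k1 k : k1 <= k ->
  exists h, Defs.prefix E k = Defs.prefix E k1 ++ h.
Proof.
move=> Hk; exists (pmap E (iota k1 (k - k1))).
by rewrite /Defs.prefix -pmap_cat -iotaD subnKC.
Qed.

Lemma op_at_mono (E : execution P V) k1 k p j x : k1 <= k ->
  op_at (Defs.prefix E k1) p j = Some x -> op_at (Defs.prefix E k) p j = Some x.
Proof.
move=> /(prefix_mono E) [h ->]; rewrite /op_at /proj /invs !pmap_cat onth_cat.
by move=> H; rewrite -onthTE H.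
Qed.

Lemma ans_at_mono (E : execution P V) k1 k p j x : k1 <= k ->
  ans_at (Defs.prefix E k1) p j = Some x -> ans_at (Defs.prefix E k) p j = Some x.
Proof.
move=> /(prefix_mono E) [h ->]; rewrite /ans_at /proj /ress !pmap_cat onth_cat.
by move=> H; rewrite -onthTE H.
Qed.

End Exec.

Theorem lemma2 (P : finType) (V : eqType) (L : ledger P V) :
  eventually_consistent L ->
  forall (prop : P -> V) (correct : pred P) (E : execution P V),
    (exists p, correct p) ->
    L E -> follows_alg E prop -> fair E prop correct ->
    [/\ consensus_agreement E prop,
        consensus_validity E prop &
        consensus_termination E prop correct].
Proof.
move=> HL prop correct E [p0 Hp0] LE Hfol Hfair.
have [ECa ECb] := HL E LE.
have Hdg : forall p o, decides E prop p o -> exists k j s,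
   op_at (Defs.prefix E k) p j = Some (Get V) /\
   ans_at (Defs.prefix E k) p j = Some (Ret (o :: s)).
  move=> p o [k Hk].
  have Hne : arun (prop p) (proj p (Defs.prefix E k)) <> None by rewrite Hk.
  have [|u [Et Hu]] := start_shape Hne.
    move: Hk; rewrite /arun; case: (proj p _) => [|e1 [|e2 u]] //=.
    by case: e1 => [[|r]|a] //=; case: eqP.
  rewrite Et /arun /= eqxx /= in Hk.
  have [j [s [H1 H2]]] := ready_decided Hk.
  by exists k, j.+1, s; rewrite /op_at /ans_at Et.
have Hsig : forall k p j o s, op_at (Defs.prefix E k) p j = Some (Get V) ->
   ans_at (Defs.prefix E k) p j = Some (Ret (o :: s)) ->
   forall sigma, (forall x, is_op (Defs.prefix E k) x ->
      is_complete_op (Defs.prefix E k) x -> x \in sigma) ->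
   o :: s \in getrets (pmap (completed_op (Defs.prefix E k)) sigma).
  move=> k p j o s Ho Ha sigma Hin.
  apply: (getrets_sigma (x := (p, j))); last by rewrite /completed_op /= Ho Ha.
  apply: Hin; last by rewrite /is_complete_op /= Ha.
  by rewrite /is_op /= -onthTE; move: Ho; rewrite /op_at => ->.
split.
- move=> p q o o' /Hdg [k1 [j1 [s1 [Ho1 Ha1]]]] /Hdg [k2 [j2 [s2 [Ho2 Ha2]]]].
  have [sigma [_ _ Hin Hleg]] := ECa (maxn k1 k2).
  have G1 := Hsig _ _ _ _ _ (op_at_mono (leq_maxl k1 k2) Ho1)
                 (ans_at_mono (leq_maxl k1 k2) Ha1) _ Hin.
  have G2 := Hsig _ _ _ _ _ (op_at_mono (leq_maxr k1 k2) Ho2)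
                 (ans_at_mono (leq_maxr k1 k2) Ha2) _ Hin.
  exact: legal_agree Hleg G1 G2.
- move=> v Hv p o /Hdg [k [j [s [Ho Ha]]]].
  have [sigma [_ _ Hin Hleg]] := ECa k.
  have G := Hsig _ _ _ _ _ Ho Ha _ Hin.
  have Happ : all (pred1 v) (appends (pmap (completed_op (Defs.prefix E k)) sigma)).
    apply: appends_sigma => x r H.
    by rewrite -(Hv x.1); apply: (append_prop (Hfol x.1 k) H).
  have := legal_valid Hleg isT Happ G.
  by rewrite /= => /andP[/eqP].
- move=> p Hp; apply: Classical_Prop.NNPP => Hn.
  have Hnd : forall k o, arun (prop p) (proj p (Defs.prefix E k)) <> Some (ADecided o).
    by move=> k o H; apply: Hn; exists o, k.
  have Hgrow : forall n, exists k, n <= size (proj p (Defs.prefix E k)).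
    elim=> [|n [k Hk]]; first by exists 0.
    have [k' Hk'] := Hfair p Hp k (Hnd k).
    by exists k'; apply: leq_ltn_trans Hk Hk'.
  have [k0 Hk0] := Hgrow 2.
  have [u0 [E0 _]] := start_shape (Hfol p k0) Hk0.
  have HA : op_at (Defs.prefix E k0) p 0 = Some (Append (prop p)) by rewrite /op_at E0.
  have HC : is_complete_op (Defs.prefix E k0) (p, 0) by rewrite /is_complete_op /ans_at /= E0.
  have [k' [_ Hb]] := ECb k0.
  set j := size (invs (proj p (Defs.prefix E k'))).
  have [m Hm] := Hgrow (2 * j + 4).
  have H2 : 2 <= size (proj p (Defs.prefix E m)) by move: Hm; lia.
  have [u [Em Hu]] := start_shape (Hfol p m) H2.
  have [|s [Hg Hr Hd]] := ready_get (j := j) Hu.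
    by move: Hm; rewrite Em /=; lia.
  have Hvs : prop p \in s.
    apply: (Hb p j.+1 m s (leqnSn j) _ _ p 0 (prop p) HA HC).
      by rewrite /op_at Em.
    by rewrite /ans_at Em.
  case: s Hvs Hd {Hg Hr} => [|x s'] // _ Hd.
  apply: (Hnd m x); rewrite Em /arun /= eqxx /=.
  exact: Hd x s' erefl.
Qed.
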